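(* Let $p$ be a prime, $\Gamma\subset\mathbb{F}_p^*$ a multiplicative subgroup, and $A,B\subseteq\mathbb{F}_p$ two sets. Let $g:\mathbb{F}_p\to\mathbb{R}_{\ge0}$ be an even $\Gamma$-invariant function supported on $S_\Gamma(A-A)$. Suppose that $A-B\subseteq\Gamma\sqcup\{0\}$ and $$|B|\sum_x g(x)(A\circ A)(x)\ge3\sum_x g(x)(A\circ B)(x).$$ Then $$\left(\sum_x g(x)(A\circ A)(x)\right)^2\ll\frac{\mathsf{T}(A,B)}{|B|^2|\Gamma|}\cdot\sum_x g^2(x)(\Gamma\circ\Gamma)(x).$$
   Context: For $Q\subseteq\mathbb{F}_p$, $S_\Gamma(Q)$ is the minimal $\Gamma$-invariant set containing $Q$ (i.e. $\Gamma Q=\{\gamma x:\gamma\in\Gamma,x\in Q\}$). Sets are identified with indicator functions; $(X\circ Y)(x)=\sum_yX(y)Y(y+x)$. $g$ even means $g(-x)=g(x)$; $\Gamma$-invariant means $g(\gamma x)=g(x)$ for $\gamma\in\Gamma$. $\mathsf{E}^\times(X,Y)=|\{x_1y_1=x_2y_2: x_i\in X,y_i\in Y\}|$ and $\mathsf{T}(A,B)=\sum_{b,b'\in B}\mathsf{E}^\times(A-b,A-b')$. $X\ll Y$ means $X\le cY$ with an absolute constant $c$. *)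

(* Defs.v *)
From HB Require Import structures.
From mathcomp Require Import all_boot all_order all_algebra.
From mathcomp Require Import Rstruct.
From Stdlib Require Import Rdefinitions.
Set Implicit Arguments. Unset Strict Implicit. Unset Printing Implicit Defensive.
Import Order.TTheory GRing.Theory Num.Theory.
Local Open Scope ring_scope.

Section Defs.
Variable p : nat.
Local Notation F := 'F_p.

Definition mult_subgroup (G : {set F}) : Prop :=
  [/\ 0 \notin G, 1 \in G,
      (forall x y, x \in G -> y \in G -> x * y \in G) &
      (forall x, x \in G -> x^-1 \in G)].

Definition diffset (X Y : {set F}) : {set F} := [set x - y | x in X, y in Y].

Definition transl (X : {set F}) (b : F) : {set F} := [set x - b | x in X].

Definition SGamma (G Q : {set F}) : {set F} := [set g * x | g in G, x in Q].

Definition ind (X : {set F}) (x : F) : R := (x \in X)%:R.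

Definition conv (X Y : {set F}) (x : F) : R :=
  \sum_(y : F) ind X y * ind Y (y + x).

Definition Emul (X Y : {set F}) : nat :=
  #|[set q : F * F * F * F |
      [&& q.1.1.1 \in X, q.1.1.2 \in Y, q.1.2 \in X, q.2 \in Y &
          q.1.1.1 * q.1.1.2 == q.1.2 * q.2]]|.

Definition Tq (A B : {set F}) : nat :=
  (\sum_(b in B) \sum_(b' in B) Emul (transl A b) (transl A b'))%N.
End Defs.

(* Main.v *)
Require Import Defs.
From HB Require Import structures.
From mathcomp Require Import all_boot all_order all_algebra.
From mathcomp Require Import Rstruct.
From Stdlib Require Import Rdefinitions.
From mathcomp Require Import ring lra.
Import Order.TTheory GRing.Theory Num.Theory.
Local Open Scope ring_scope.
Set Implicit Arguments. Unset Strict Implicit.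

Section H.
Variable p : nat.
Local Notation F := 'F_p.

Lemma sum_delta (a : F) (G : F -> R) : \sum_x ((a == x)%:R * G x) = G a.
Proof.
rewrite (bigD1 a) //= eqxx mul1r big1 ?addr0 // => x xa.
by rewrite eq_sym (negbTE xa) mul0r.
Qed.

Lemma sum_delta' (a : F) (G : F -> R) : \sum_x ((x == a)%:R * G x) = G a.
Proof. by rewrite -(sum_delta a); apply eq_bigr => x _; rewrite eq_sym. Qed.

Lemma sum_ind (X : {set F}) : \sum_x ind X x = #|X|%:R.
Proof.
have -> : #|X|%:R = \sum_(i : F | i \in X) (1:R) by rewrite sumr_const.
rewrite [RHS]big_mkcond /=; apply eq_bigr => x _; by rewrite /ind; case: (x \in X).
Qed.

Lemma conv_sum (X Y : {set F}) (G : F -> R) :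
  \sum_x G x * conv X Y x = \sum_y \sum_z ind X y * ind Y z * G (z - y).
Proof.
rewrite /conv; under eq_bigr do rewrite mulr_sumr.
rewrite exchange_big; apply eq_bigr => y _.
rewrite [RHS](reindex_inj (addrI y)) /=; apply eq_bigr => x _.
have -> : y + x - y = x by ring.
by rewrite mulrC.
Qed.

Lemma mem_transl (X : {set F}) b x : (x \in transl X b) = (x + b \in X).
Proof.
apply/imsetP/idP => [[a aX ->]|H]; first by rewrite subrK.
by exists (x + b) => //; rewrite addrK.
Qed.

Lemma ler_bool (b c : bool) : (b -> c) -> (b%:R : R) <= c%:R.
Proof. by case: b; case: c => // H; have := H erefl. Qed.

Lemma CS (u v : F -> R) :
  (\sum_i u i * v i) ^+ 2 <= (\sum_i u i ^+ 2) * (\sum_i v i ^+ 2).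
Proof.
have H : 0 <= \sum_i \sum_j (u i * v j - u j * v i) ^+ 2.
  by apply: sumr_ge0 => i _; apply: sumr_ge0 => j _; apply: sqr_ge0.
have E : \sum_i \sum_j (u i * v j - u j * v i) ^+ 2 =
   \sum_i \sum_j (u i ^+ 2 * v j ^+ 2) + \sum_i \sum_j (u j ^+ 2 * v i ^+ 2)
   - 2 * \sum_i \sum_j (u i * v i * (u j * v j)).
  rewrite mulr_sumr -big_split -sumrB; apply eq_bigr => i _.
  rewrite mulr_sumr -big_split -sumrB; apply eq_bigr => j _ /=; ring.
have E1 : \sum_i \sum_j (u i ^+ 2 * v j ^+ 2) = (\sum_i u i ^+ 2) * (\sum_i v i ^+ 2).
  by rewrite big_distrlr.
have E2 : \sum_i \sum_j (u j ^+ 2 * v i ^+ 2) = (\sum_i u i ^+ 2) * (\sum_i v i ^+ 2).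
  by rewrite exchange_big big_distrlr.
have E3 : \sum_i \sum_j (u i * v i * (u j * v j)) = (\sum_i u i * v i) ^+ 2.
  by rewrite expr2 big_distrlr.
rewrite E E1 E2 E3 in H.
lra.
Qed.
Definition hh (A : {set F}) (b x : F) : R := ((x + b \in A) && (x != 0))%:R.
Definition ff (A : {set F}) (b l : F) : R :=
  \sum_x \sum_y hh A b x * hh A b y * (y / x == l)%:R.

Lemma EmulE (A : {set F}) b b' :
  (Emul (transl A b) (transl A b'))%:R =
  \sum_x1 \sum_y1 \sum_x2 \sum_y2
    ([&& x1 + b \in A, y1 + b' \in A, x2 + b \in A, y2 + b' \in A &
       x1 * y1 == x2 * y2]%:R : R).
Proof.
rewrite [RHS]pair_bigA [RHS]pair_bigA [RHS]pair_bigA.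
rewrite /Emul -sum1_card natr_sum [LHS]big_mkcond /=.
apply eq_bigr => [[[[x1 y1] x2] y2]] _ /=.
by rewrite inE /= !mem_transl; case: [&& _, _, _, _ & _].
Qed.

Lemma key (A : {set F}) b b' :
  \sum_l ff A b l * ff A b' l <= (Emul (transl A b) (transl A b'))%:R.
Proof.
rewrite EmulE /ff.
under eq_bigr => l _ do rewrite [X in X * _]exchange_big big_distrlr /=.
rewrite exchange_big; apply ler_sum => y _.
rewrite exchange_big; apply ler_sum => x' _.
under eq_bigr => l _ do rewrite big_distrlr /=.
rewrite exchange_big; apply ler_sum => x _.
rewrite exchange_big; apply ler_sum => y' _.
rewrite (eq_bigr (fun l => (y / x == l)%:R * (hh A b x * hh A b y *
   (hh A b' x' * hh A b' y' * (y' / x' == l)%:R)))); last by move=> l _; ring.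
rewrite sum_delta /hh -!natrM !mulnb; apply ler_bool.
case/and3P=> /and3P[/andP[-> x0] -> _] /and3P[/andP[-> x'0] -> _].
rewrite eqr_div // => /eqP E; apply/eqP.
by rewrite -E mulrC.
Qed.
End H.

Theorem proposition4 :
  exists c : R, 0 < c /\
  forall (p : nat) (Gam A B : {set 'F_p}) (g : 'F_p -> R),
    prime p ->
    mult_subgroup Gam ->
    B != set0 ->
    (forall x, 0 <= g x) ->
    (forall x, g (- x) = g x) ->
    (forall gam x, gam \in Gam -> g (gam * x) = g x) ->
    (forall x, x \notin SGamma Gam (diffset A A) -> g x = 0) ->
    (forall a b, a \in A -> b \in B -> (a - b \in Gam) || (a - b == 0)) ->
    (#|B|%:R * \sum_(x : 'F_p) g x * conv A A x
       >= 3 * \sum_(x : 'F_p) g x * conv A B x) ->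
    (\sum_(x : 'F_p) g x * conv A A x) ^+ 2
      <= c * ((Tq A B)%:R / (#|B|%:R ^+ 2 * #|Gam|%:R))
           * \sum_(x : 'F_p) g x ^+ 2 * conv Gam Gam x.
Proof.
exists 9; split; first lra.
move=> p Gam A B g _ [G0 G1 GM GV] Bne g0 geven ginv _ hAB hyp.
set nB : R := #|B|%:R. set nG : R := #|Gam|%:R.
set sig := \sum_(x : 'F_p) g x * conv A A x.
set Gab := \sum_(x : 'F_p) g x * conv A B x.
set S := \sum_(x : 'F_p) g x ^+ 2 * conv Gam Gam x.
set T : R := (Tq A B)%:R.
pose h := hh A.
pose M := \sum_b ind B b * \sum_x \sum_y h b x * h b y * g (y - x).
pose f := ff A.
pose Fl l := \sum_b ind B b * f b l.
pose uu l := ind Gam l * g (l - 1).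
have Gx : forall b x, b \in B -> x + b \in A -> x != 0 -> x \in Gam.
  move=> b x bB xA x0; have := hAB _ _ xA bB; rewrite addrK.
  by rewrite (negbTE x0) orbF.
have nBpos : 0 < nB by rewrite /nB ltr0n card_gt0.
have nGpos : 0 < nG by rewrite /nG ltr0n card_gt0; apply/set0Pn; exists 1.
have ind0 : forall X x, 0 <= ind (p:=p) X x by move=> X x; rewrite /ind ler0n.
have conv0 : forall X Y x, 0 <= conv (p:=p) X Y x.
  by move=> X Y x; apply: sumr_ge0 => y _; apply: mulr_ge0.
have sig0 : 0 <= sig by apply: sumr_ge0 => x _; apply: mulr_ge0.
have S0 : 0 <= S by apply: sumr_ge0 => x _; apply: mulr_ge0 => //; apply: sqr_ge0.
have HD : nB * sig <= M + 2 * Gab.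
  pose Q := \sum_b ind B b * \sum_x ind A (x + b) * g x.
  have GQ : Gab = Q.
    rewrite /Gab conv_sum exchange_big /Q; apply eq_bigr => b _.
    rewrite (reindex_inj (addIr b)) mulr_sumr; apply eq_bigr => x _ /=.
    have -> : b - (x + b) = - x by ring.
    by rewrite geven; ring.
  have sigE : nB * sig = \sum_b ind B b *
      \sum_x \sum_y ind A (x + b) * ind A (y + b) * g (y - x).
    rewrite /sig conv_sum /nB -sum_ind mulr_suml; apply eq_bigr => b _.
    congr (_ * _).
    rewrite (reindex_inj (addIr b)); apply eq_bigr => x _ /=.
    rewrite (reindex_inj (addIr b)); apply eq_bigr => y _ /=.
    by have -> : y + b - (x + b) = y - x by ring.
  have E2 : forall b, \sum_x \sum_y ind A (y + b) * (x == 0)%:R * g (y - x)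
      = \sum_x ind A (x + b) * g x.
    move=> b.
    transitivity (\sum_x (x == 0)%:R * \sum_y ind A (y + b) * g (y - x)).
      apply eq_bigr => x _; rewrite mulr_sumr; apply eq_bigr => y _; ring.
    by rewrite sum_delta'; apply eq_bigr => y _; rewrite subr0.
  have E3 : forall b, \sum_x \sum_y ind A (x + b) * (y == 0)%:R * g (y - x)
      = \sum_x ind A (x + b) * g x.
    move=> b; apply eq_bigr => x _.
    transitivity (\sum_y (y == 0)%:R * (ind A (x + b) * g (y - x))).
      by apply eq_bigr => y _; ring.
    by rewrite sum_delta' sub0r geven.
  rewrite sigE GQ /M /Q mulr_sumr -big_split /=; apply ler_sum => b _.
  apply: (le_trans (y := ind B b * (\sum_x \sum_y h b x * h b y * g (y - x)
     + \sum_x \sum_y ind A (y + b) * (x == 0)%:R * g (y - x)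
     + \sum_x \sum_y ind A (x + b) * (y == 0)%:R * g (y - x)))); last first.
    by rewrite E2 E3 le_eqVlt; apply/orP; left; apply/eqP; ring.
  apply: ler_wpM2l => //.
  rewrite -!big_split; apply ler_sum => x _; rewrite -!big_split; apply ler_sum => y _ /=.
  rewrite /h /hh /ind; have := g0 (y - x); set gv := g (y - x).
  case: (x + b \in A); case: (y + b \in A); case: (x == 0); case: (y == 0) => /=; lra.
have HA : M = \sum_l uu l * Fl l.
  rewrite /M /Fl; under [RHS]eq_bigr => l _ do rewrite mulr_sumr.
  rewrite [RHS]exchange_big; apply eq_bigr => b _.
  have [bB|bB] := boolP (b \in B); last first.
    rewrite /ind (negbTE bB) mul0r big1 // => l _; by rewrite mul0r mulr0.
  rewrite /ind bB mul1r.
  under [RHS]eq_bigr => l _ do rewrite mul1r.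
  rewrite /f /ff.
  under [RHS]eq_bigr => l _ do rewrite mulr_sumr.
  rewrite [RHS]exchange_big; apply eq_bigr => x _.
  under [RHS]eq_bigr => l _ do rewrite mulr_sumr.
  rewrite [RHS]exchange_big; apply eq_bigr => y _.
  rewrite (eq_bigr (fun l => (y / x == l)%:R * (uu l * (h b x * h b y))));
    last by move=> l _; ring.
  rewrite sum_delta /uu /h /hh.
  have [xA|xA] := boolP (x + b \in A); last by rewrite !mul0r mulr0.
  have [x0|x0] := eqVneq x 0; first by rewrite !mul0r mulr0.
  have [yA|yA] := boolP (y + b \in A); last by rewrite /= !(mul0r, mulr0).
  have [y0|y0] := eqVneq y 0; first by rewrite /= !(mul0r, mulr0).
  have xG := Gx _ _ bB xA x0; have yG := Gx _ _ bB yA y0.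
  rewrite /= /ind GM // ?GV //.
  have -> : y - x = x * (y / x - 1) by field.
  by rewrite ginv // !mul1r mulr1.
have HB : \sum_l uu l ^+ 2 = S / nG.
  have memM : forall u l, u \in Gam -> (u * l \in Gam) = (l \in Gam).
    move=> u l uG; apply/idP/idP => H; last exact: GM.
    have u0 : u != 0 by apply: contraNneq G0 => <-.
    by have := GM _ _ (GV _ uG) H; rewrite mulrA mulVf ?mul1r.
  have -> : S = nG * \sum_l uu l ^+ 2.
    rewrite /S conv_sum /nG -sum_ind mulr_suml; apply eq_bigr => u _.
    have [uG|uG] := boolP (u \in Gam); last first.
      rewrite /ind (negbTE uG) !mul0r big1 // => w _; by rewrite !mul0r.
    have u0 : u != 0 by apply: contraNneq G0 => <-.
    rewrite (reindex_inj (mulfI u0)) mulr_sumr /=; apply eq_bigr => l _.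
    have -> : u * l - u = u * (l - 1) by ring.
    rewrite ginv // /uu /ind memM // uG; case: (l \in Gam) => /=; ring.
  by field; rewrite lt0r_neq0.
have HC : \sum_l Fl l ^+ 2 <= T.
  rewrite /T /Tq natr_sum; under [X in _ <= X]eq_bigr => b _ do rewrite natr_sum.
  rewrite /Fl; under [X in X <= _]eq_bigr => l _ do rewrite expr2 big_distrlr /=.
  rewrite exchange_big [X in _ <= X]big_mkcond; apply ler_sum => b _.
  have [bB|bB] := boolP (b \in B); last first.
    rewrite big1 // => l _; rewrite big1 // => b' _.
    by rewrite /ind (negbTE bB) !mul0r.
  rewrite exchange_big [X in _ <= X]big_mkcond; apply ler_sum => b' _.
  have [bB'|bB'] := boolP (b' \in B); last first.
    rewrite big1 // => l _.
    by rewrite /ind (negbTE bB') !mul0r mulr0.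
  rewrite /ind bB bB' /=.
  under eq_bigr => l _ do rewrite !mul1r.
  exact: key.
have T0 : 0 <= T by rewrite /T ler0n.
have HM : M ^+ 2 <= S / nG * T.
  rewrite HA; apply: le_trans (CS _ _) _; rewrite HB.
  by apply: ler_wpM2l => //; apply: divr_ge0 => //; apply: ltW.
have K0 : 0 <= S / nG * T by apply: mulr_ge0 => //; apply: divr_ge0 => //; apply: ltW.
have hyp' : 3 * Gab <= nB * sig := hyp.
have M3 : nB * sig <= 3 * M by lra.
have Msq : (nB * sig) ^+ 2 <= 9 * (S / nG * T).
  have nBs0 : 0 <= nB * sig by apply: mulr_ge0 => //; apply: ltW.
  apply: (le_trans (y := (3 * M) ^+ 2)).
    by rewrite ler_sqr // nnegrE; lra.
  by rewrite exprMn; lra.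
have -> : 9 * (T / (nB ^+ 2 * nG)) * S = 9 * (S / nG * T) / nB ^+ 2.
  by field; apply/andP; split; rewrite lt0r_neq0.
rewrite ler_pdivlMr ?exprn_gt0 //.
by rewrite mulrC -exprMn.
Qed.
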